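(* Let $(p_n)_{n \ge 1}$ be a strictly increasing sequence of prime numbers and fix $\ell \in \mathbb{N}$. Then $M = \left\langle \frac{1}{p_i p_{i+\ell}} \;\middle|\; i \in \mathbb{N} \right\rangle$ is an atomic weak reciprocal Puiseux monoid that does not satisfy the ascending chain condition on principal ideals (ACCP).
   Context: A Puiseux monoid is an additive submonoid of $(\mathbb{Q}_{\ge 0},+)$. A weak reciprocal Puiseux monoid is one of the form $\langle \frac{1}{d_n} \mid n \in \mathbb{N}\rangle$ for a strictly increasing sequence $(d_n)_{n\ge1}$ of positive integers. An atom of $M$ is a nonzero element $a$ such that $a=x+y$ with $x,y\in M$ forces $x=0$ or $y=0$; $M$ is atomic if each element is a finite sum of atoms. A principal ideal of $M$ is a set $r + M = \{r+q \mid q\in M\}$ with $r \in M$; $M$ satisfies the ACCP if every ascending chain of principal ideals is eventually constant. *)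

(* Defs.v *)
From mathcomp Require Import all_boot all_order all_algebra.
Set Implicit Arguments. Unset Strict Implicit. Unset Printing Implicit Defensive.
Import Order.TTheory GRing.Theory Num.Theory.
Local Open Scope ring_scope.

Definition gen (g : nat -> rat) : rat -> Prop :=
  fun q => exists s : seq nat, q = \sum_(i <- s) g i.

Definition puiseux_monoid (M : rat -> Prop) : Prop :=
  [/\ M 0, (forall x y, M x -> M y -> M (x + y)) & (forall x, M x -> 0 <= x)].

Definition weak_reciprocal (M : rat -> Prop) : Prop :=
  puiseux_monoid M /\
  exists d : nat -> nat,
    (forall m n, (m < n)%N -> (d m < d n)%N) /\ (forall n, (0 < d n)%N) /\
    (forall q, M q <-> gen (fun n => 1 / (d n)%:R) q).

Definition atom (M : rat -> Prop) (a : rat) : Prop :=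
  M a /\ a <> 0 /\
  (forall x y, M x -> M y -> a = x + y -> x = 0 \/ y = 0).

Definition atomic (M : rat -> Prop) : Prop :=
  forall q, M q -> exists s : seq rat,
    (forall a, a \in s -> atom M a) /\ q = \sum_(a <- s) a.

Definition pideal (M : rat -> Prop) (r : rat) : rat -> Prop :=
  fun x => exists q, M q /\ x = r + q.

Definition ACCP (M : rat -> Prop) : Prop :=
  forall r : nat -> rat,
    (forall n, M (r n)) ->
    (forall n x, pideal M (r n) x -> pideal M (r n.+1) x) ->
    exists N, forall n, (N <= n)%N -> forall x, pideal M (r n) x <-> pideal M (r N) x.

(* Main.v *)
Require Import Defs.
From mathcomp Require Import all_boot all_order all_algebra zify ring lra.
Import Order.TTheory GRing.Theory Num.Theory.
Local Open Scope ring_scope.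

Definition gg (p : nat -> nat) (ell : nat) (j : nat) : rat :=
  1 / (p j * p (j + ell))%:R.

Lemma gg_pos p ell j : (forall n, prime (p n)) -> 0 < gg p ell j.
Proof.
move=> hp; rewrite /gg div1r invr_gt0 ltr0n muln_gt0.
by rewrite !prime_gt0.
Qed.

Lemma sub_le (g : nat -> rat) (F : pred nat) s m :
  (forall j, 0 <= g j) -> m \in s -> F m -> g m <= \sum_(j <- s | F j) g j.
Proof.
move=> g0; elim: s => //= a s IH; rewrite in_cons big_cons => /orP[/eqP<-|Hm] Fm.
  by rewrite Fm lerDl sumr_ge0.
case: (F a); last exact: IH.
by rewrite (le_trans (IH Hm Fm)) // lerDr.
Qed.

Lemma filter_le (g : nat -> rat) (F : pred nat) s :
  (forall j, 0 <= g j) -> \sum_(j <- s | F j) g j <= \sum_(j <- s) g j.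
Proof.
move=> g0; rewrite [X in _ <= X](bigID F) /= lerDl sumr_ge0 //.
Qed.

Lemma max_in (s : seq nat) : s != [::] -> exists2 m, m \in s & forall j, j \in s -> (j <= m)%N.
Proof.
elim: s => //= a [|b s] IH _.
  by exists a; rewrite ?mem_seq1 // => j; rewrite mem_seq1 => /eqP->.
have [m ms Hm] := IH isT.
case: (leqP a m) => am.
  exists m; first by rewrite in_cons ms orbT.
  by move=> j; rewrite in_cons => /orP[/eqP->|/Hm].
exists a; first by rewrite in_cons eqxx.
move=> j; rewrite in_cons => /orP[/eqP->//|/Hm]; lia.
Qed.

Definition Pq (q : nat) (x : rat) :=
  exists N : nat, exists z : int, ~~ (q %| N)%N /\ N%:R * x = z%:~R.

Lemma Pq0 q : prime q -> Pq q 0.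
Proof.
move=> pq; exists 1%N, 0; rewrite mulr0; split => //.
by rewrite dvdn1; case: eqP pq => // ->.
Qed.

Lemma Pq_add q x y : prime q -> Pq q x -> Pq q y -> Pq q (x + y).
Proof.
move=> pq [N1 [z1 [h1 e1]]] [N2 [z2 [h2 e2]]].
exists (N1 * N2)%N, (z1 * N2%:Z + z2 * N1%:Z); split.
  by rewrite Euclid_dvdM // negb_or h1 h2.
rewrite natrM mulrDr intrD !intrM -e1 -e2.
rewrite -!pmulrn; ring.
Qed.

Lemma Pq_sub q x y : prime q -> Pq q x -> Pq q y -> Pq q (x - y).
Proof.
move=> pq [N1 [z1 [h1 e1]]] [N2 [z2 [h2 e2]]].
exists (N1 * N2)%N, (z1 * N2%:Z - z2 * N1%:Z); split.
  by rewrite Euclid_dvdM // negb_or h1 h2.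
rewrite natrM mulrBr intrB !intrM -e1 -e2.
rewrite -!pmulrn; ring.
Qed.

Lemma Pq_gen p ell q j : (forall n, prime (p n)) -> prime q ->
  q != p j -> q != p (j + ell) -> Pq q (gg p ell j).
Proof.
move=> hp pq h1 h2; exists (p j * p (j + ell))%N, 1; split.
  by rewrite Euclid_dvdM // !dvdn_prime2 // negb_or h1 h2.
rewrite /gg mul1r divff // pnatr_eq0 muln_eq0 negb_or.
by rewrite -!lt0n !prime_gt0.
Qed.

Lemma Pq_sum p ell q s (F : pred nat) : (forall n, prime (p n)) -> prime q ->
  (forall j, j \in s -> F j -> q != p j /\ q != p (j + ell)) ->
  Pq q (\sum_(j <- s | F j) gg p ell j).
Proof.
move=> hp pq; elim: s => [|a s IH] H; first by rewrite big_nil; exact: Pq0.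
rewrite big_cons.
have IH' : Pq q (\sum_(j <- s | F j) gg p ell j).
  by apply: IH => j js Fj; apply: H => //; rewrite in_cons js orbT.
case Fa: (F a) => //.
have [h1 h2] := H a (mem_head _ _) Fa.
apply: Pq_add => //; exact: Pq_gen...
Qed.

Lemma p_inj (p : nat -> nat) : (forall m n, (m < n)%N -> (p m < p n)%N) ->
  forall a b, p a = p b -> a = b.
Proof.
move=> hi a b e; case: (ltngtP a b) => // h; move: (hi _ _ h); lia.
Qed.

Lemma p_mono (p : nat -> nat) : (forall m n, (m < n)%N -> (p m < p n)%N) ->
  forall a b, (a <= b)%N -> (p a <= p b)%N.
Proof.
move=> hi a b; rewrite leq_eqVlt => /orP[/eqP->//|/hi]; lia.
Qed.

Lemma gg_anti p ell a b : (forall n, prime (p n)) ->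
  (forall m n, (m < n)%N -> (p m < p n)%N) ->
  (a <= b)%N -> gg p ell b <= gg p ell a.
Proof.
move=> hp hi ab; rewrite /gg !div1r lef_pV2 ?posrE ?ltr0n ?muln_gt0 ?prime_gt0 //.
by rewrite ler_nat leq_mul // p_mono // leq_add2r.
Qed.

Lemma no_split p ell i s1 s2 : (forall n, prime (p n)) ->
  (forall m n, (m < n)%N -> (p m < p n)%N) -> (0 < ell)%N ->
  s1 != [::] -> s2 != [::] ->
  gg p ell i = \sum_(j <- s1) gg p ell j + \sum_(j <- s2) gg p ell j -> False.
Proof.
move=> hp hi hell n1 n2 E.
rewrite -/(gg p ell) in E; set g := gg p ell in E *.
have g0 : forall j, 0 <= g j by move=> j; apply/ltW/gg_pos.
pose s := s1 ++ s2.
have Hs : g i = \sum_(j <- s) g j by rewrite big_cat.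
have sn : s != [::] by rewrite /s; case: (s1) n1.
have [m ms mmax] := max_in _ sn.
have gm : g m < g i.
  move: ms; rewrite mem_cat => /orP[] ms.
    have [e es _] := max_in _ n2.
    rewrite -/g E; apply: (@lt_le_trans _ _ (g m + g e)); first by rewrite ltrDl gg_pos.
    by apply: lerD; [exact: (@sub_le g xpredT s1 m g0 ms) | exact: (@sub_le g xpredT s2 e g0 es)].
  have [e es _] := max_in _ n1.
  rewrite E; apply: (@lt_le_trans _ _ (g e + g m)); first by rewrite ltrDr gg_pos.
  by apply: lerD; [exact: (@sub_le g xpredT s1 e g0 es) | exact: (@sub_le g xpredT s2 m g0 ms)].
have im : (i < m)%N.
  rewrite ltnNge; apply/negP => mi; have := @gg_anti p ell m i hp hi mi.
  by rewrite -/g leNgt gm.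
have [a [b [hb ht]]] : exists a b, (b < ell)%N /\ (m - i.+1 = a * ell + b)%N.
  by exists ((m - i.+1) %/ ell)%N, ((m - i.+1) %% ell)%N; rewrite ltn_pmod // -divn_eq.
pose n := fun k => (i.+1 + b + k * ell)%N.
have na : n a = m by rewrite /n; lia.
have nS : forall k, n k.+1 = (n k + ell)%N by move=> k; rewrite /n; lia.
pose F := fun k j => ((n k <= j) && (ell %| j - n 0))%N.
have Fn : forall k k', (k <= k')%N -> F k (n k').
  move=> k k' kk; rewrite /F; apply/andP; split; first by rewrite /n leq_add2l leq_mul2r kk orbT.
  have -> : (n k' - n 0 = k' * ell)%N by rewrite /n; lia.
  exact: dvdn_mull.
have FS : forall k j, F k j -> j != n k -> F k.+1 j.
  move=> k j /andP[h1 h2] jn; apply/andP; split => //.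
  case/dvdnP: h2 => w ew.
  have h3 : (k * ell < w * ell)%N by move: h1 jn ew; rewrite /n; lia.
  rewrite ltn_pmul2r // in h3.
  have h4 : (k.+1 * ell <= w * ell)%N by rewrite leq_mul2r h3 orbT.
  by move: ew h4; rewrite /n; lia.
have FSr : forall k j, F k.+1 j -> F k j.
  move=> k j /andP[h1 h2]; apply/andP; split => //; move: h1; rewrite nS; lia.
pose U := fun k => \sum_(j <- s | F k j) g j.
have base : exists z : nat, (p (n a.+1))%:R * U a.+1 = z%:R.
  exists 0%N; rewrite /U big_seq_cond big_pred0 ?mulr0 // => j.
  case js: (j \in s) => //=.
  have := mmax j js; rewrite /F nS na => jm.
  by have -> : (m + ell <= j)%N = false by lia.
have step : forall k, (k <= a)%N -> (exists z : nat, (p (n k.+1))%:R * U k.+1 = z%:R) ->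
    exists z : nat, (p (n k))%:R * U k = z%:R.
  move=> k ka [z1 Hz1].
  set q := p (n k.+1); set P := p (n k).
  have Usplit : U k = U k.+1 + \sum_(j <- s | j == n k) g j.
    rewrite /U big_mkcond [X in X + _]big_mkcond [X in _ + X]big_mkcond -big_split /=.
    apply: eq_bigr => j _.
    case: (eqVneq j (n k)) => [->|jn].
      rewrite Fn // ?eqxx.
      have -> : F k.+1 (n k) = false by rewrite /F nS; apply/negbTE; rewrite negb_and; apply/orP; left; lia.
      by rewrite add0r.
    rewrite addr0.
    have -> : F k j = F k.+1 j by apply/idP/idP => [/FS ->|/FSr].
    by [].
  have [c Hc] : exists c : nat, (P * q)%:R * \sum_(j <- s | j == n k) g j = c%:R.
    rewrite mulr_sumr (eq_bigr (fun _ => 1%:R)); first by rewrite -natr_sum; eexists.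
    move=> j /eqP ->; rewrite /g /gg /P /q nS mul1r mulfV //.
    by rewrite pnatr_eq0 muln_eq0 negb_or -!lt0n !prime_gt0.
  have hq : prime q by exact: hp.
  have qni : (i + ell < n k.+1)%N by rewrite nS /n; lia.
  have PU : Pq q (U k).
    have -> : U k = g i - \sum_(j <- s | ~~ F k j) g j.
      by rewrite Hs (bigID (F k)) /= addrK.
    apply: Pq_sub => //.
      apply: Pq_gen => //; apply/eqP => /(p_inj _ hi) e; move: qni; rewrite e; lia.
    apply: Pq_sum => // j js Fj; split; apply/eqP => /(p_inj _ hi) e.
      by move: Fj; rewrite -e Fn.
    have ej : j = n k by move: e; rewrite nS; lia.
    by move: Fj; rewrite ej Fn.
  have e1 : (P * q)%:R * U k = (P * z1 + c)%:R.
    by rewrite Usplit mulrDr Hc natrD !natrM -Hz1; ring.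
  case: PU => N [z [hN eN]].
  have e2 : (N * (P * z1 + c))%:R = (P * q)%:R * z%:~R :> rat.
    by rewrite natrM -e1 -eN !natrM; ring.
  have : ((N * (P * z1 + c))%:Z)%:~R = ((P * q)%:Z * z)%:~R :> rat.
    by rewrite intrM -!pmulrn.
  move/intr_inj => eZ.
  have := congr1 absz eZ; rewrite abszM !absz_nat => eN'.
  have : (q %| N * (P * z1 + c))%N by rewrite eN' dvdn_mulr // dvdn_mull.
  rewrite Euclid_dvdM // (negbTE hN) /= => /dvdnP [w ew].
  exists w.
  have qnz : (q%:R : rat) != 0 by rewrite pnatr_eq0 -lt0n prime_gt0.
  apply: (mulIf qnz).
  by rewrite -natrM -ew -e1 natrM; ring.
have A : forall d, (d <= a.+1)%N -> exists z : nat, (p (n (a.+1 - d)%N))%:R * U (a.+1 - d)%N = z%:R.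
  elim=> [|d IHd] dle; first by rewrite subn0.
  have e : (a.+1 - d = (a.+1 - d.+1).+1)%N by lia.
  move: (IHd (ltnW dle)); rewrite e; apply: step; lia.
have [z Hz] := A a.+1 (leqnn _).
rewrite subnn in Hz.
have F0m : F 0 m by rewrite -na Fn.
have U0pos : 0 < U 0 := lt_le_trans (gg_pos p ell m hp) (@sub_le g (F 0) s m g0 ms F0m).
have U0le : U 0 <= g i by rewrite Hs; exact: filter_le.
have z1 : (0 < z)%N by rewrite -(ltr0n rat) -Hz mulr_gt0 // ltr0n prime_gt0.
have : 1 <= (p (n 0))%:R * g i.
  rewrite (le_trans _ (ler_wpM2l _ U0le)) // Hz ler1n //.
have dpos : 0 < (p i * p (i + ell))%:R :> rat by rewrite ltr0n muln_gt0 !prime_gt0.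
rewrite /g /gg mulrA mulr1 ler_pdivlMr // mul1r ler_nat => hle.
have h1 : (p (n 0) <= p (i + ell))%N by apply: p_mono => //; rewrite /n; lia.
have h2 : (2 * p (i + ell) <= p i * p (i + ell))%N by rewrite leq_mul2r (prime_gt1 (hp i)) orbT.
have h3 : (0 < p (i + ell))%N by rewrite prime_gt0.
have hle2 : (p i * p (i + ell) <= p (n 0))%N := hle. clear hle.
move: hle2 h1 h2 h3; rewrite /n.
lia.
Qed.

Lemma sum_nseq (f : nat -> rat) c a : \sum_(j <- nseq c a) f j = c%:R * f a.
Proof.
elim: c => [|c IH]; first by rewrite big_nil mul0r.
by rewrite /= big_cons IH mulrSr mulrDl mul1r addrC.
Qed.

Theorem proposition4p7 (p : nat -> nat) (ell : nat)
  (hprime : forall n, prime (p n))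
  (hincr : forall m n, (m < n)%N -> (p m < p n)%N)
  (hell : (0 < ell)%N) :
  let M := gen (fun i => 1 / (p i * p (i + ell))%:R) in
  [/\ puiseux_monoid M, weak_reciprocal M, atomic M & ~ ACCP M].
Proof.
move=> M.
have gM : forall j, M (gg p ell j) by move=> j; exists [:: j]; rewrite big_seq1.
have Madd : forall x y, M x -> M y -> M (x + y).
  by move=> x y [s1 ->] [s2 ->]; exists (s1 ++ s2); rewrite big_cat.
have Mge0 : forall x, M x -> 0 <= x.
  by move=> x [s ->]; apply: sumr_ge0 => j _; apply/ltW/(gg_pos p ell j hprime).
have M0 : M 0 by exists [::]; rewrite big_nil.
have Mn : forall c j, M (c%:R * gg p ell j).
  by move=> c j; exists (nseq c j); rewrite sum_nseq.
have PM : puiseux_monoid M by split.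
split => //.
- split => //; exists (fun n => (p n * p (n + ell))%N); split; [|split].
  + move=> a b ab; apply: ltn_mul; apply: hincr => //; rewrite ltn_add2r //.
  + by move=> n; rewrite muln_gt0 !prime_gt0.
  + by move=> q.
- move=> q [s ->]; exists (map (gg p ell) s); split; last by rewrite big_map.
  move=> a /mapP [j _ ->]; split; first exact: gM.
  split; first by apply/eqP; rewrite gt_eqF // gg_pos.
  move=> x y [s1 ->] [s2 ->] e.
  case: (eqVneq s1 [::]) => [->|n1]; first by left; rewrite big_nil.
  case: (eqVneq s2 [::]) => [->|n2]; first by right; rewrite big_nil.
  exfalso; exact: (@no_split p ell j s1 s2 hprime hincr hell n1 n2 e).
- move=> H.
  pose r := fun k => 1 / (p (k * ell)%N)%:R : rat.
  have pnz : forall k, (p k)%:R != 0 :> rat by move=> k; rewrite pnatr_eq0 -lt0n prime_gt0.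
  have Mr : forall k, M (r k).
    move=> k; have := Mn (p (k * ell + ell)%N) (k * ell)%N.
    suff -> : r k = (p (k * ell + ell)%N)%:R * gg p ell (k * ell)%N by [].
    by rewrite /r /gg natrM; field; rewrite !pnz.
  have rd : forall k, r k = r k.+1 + (p (k * ell + ell) - p (k * ell))%N%:R * gg p ell (k * ell)%N.
    move=> k; rewrite /r /gg mulSnr natrB; last by apply/ltnW/hincr; lia.
    by rewrite natrM; field; rewrite !pnz.
  have chain : forall n x, pideal M (r n) x -> pideal M (r n.+1) x.
    move=> n x [q [Mq ->]].
    exists ((p (n * ell + ell) - p (n * ell))%N%:R * gg p ell (n * ell)%N + q); split.
      by apply: Madd.
    by rewrite rd addrA.
  have [N HN] := H r Mr chain.
  have : pideal M (r N.+1) (r N.+1) by exists 0; rewrite addr0.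
  move/(HN N.+1 (leqnSn N)) => [q [Mq e]].
  move: e; rewrite (rd N).
  set D := (_ * gg p ell _).
  move=> e.
  have hc : (0 < p (N * ell + ell) - p (N * ell))%N.
    by rewrite subn_gt0; apply: hincr; lia.
  have hD : 0 < D by rewrite /D mulr_gt0 ?gg_pos // ltr0n.
  have hq := Mge0 q Mq.
  lra.
Qed.
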